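(* Let $n\in\mathbb N$, let $K_1,\dots,K_n$ be singular kernel functions and let $J$ be an arbitrary $n$-field function. Then for each $j\in\{0,1,\dots,n\}$ the function $m_j:\overline S\to[-\infty,\infty)$ is continuous in the extended sense. That is, at points $\mathbf y$ with $m_j(\mathbf y)=-\infty$ one has $m_j(\mathbf x)\to-\infty$ as $\mathbf x\to\mathbf y$.
   Context: A kernel function is a function $K:(-1,0)\cup(0,1)\to\mathbb R$ that is concave on $(-1,0)$ and concave on $(0,1)$ and satisfies $\lim_{t\downarrow0}K(t)=\lim_{t\uparrow0}K(t)$. It is extended to $[-1,1]$ with values in $[-\infty,\infty)$ by its one-sided limits at $-1,0,1$. A kernel function is singular if $K(0)=-\infty$. An $n$-field function is a function $J:[0,1]\to[-\infty,\infty)$ that is bounded above and whose set of finite values has total weight strictly greater than $n$. Here the points $0$ and $1$ each have weight $1/2$ and every point of $(0,1)$ has weight $1$. No continuity of $J$ is assumed. $\overline S=\{\mathbf y\in\mathbb R^n:0\le y_1\le\dots\le y_n\le1\}$. $F(\mathbf y,t)=J(t)+\sum_{i=1}^nK_i(t-y_i)$, with the convention $a+(-\infty)=-\infty$. Set $y_0:=0$ and $y_{n+1}:=1$. For $j=0,\dots,n$ let $I_j(\mathbf y)=[y_j,y_{j+1}]$ and $m_j(\mathbf y)=\sup_{t\in I_j(\mathbf y)}F(\mathbf y,t)$. *)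

(* Defs.v *)
From HB Require Import structures.
From mathcomp Require Import all_boot all_order all_algebra.
From mathcomp Require Import all_classical all_reals all_analysis.
Set Implicit Arguments. Unset Strict Implicit. Unset Printing Implicit Defensive.
Import Order.TTheory GRing.Theory Num.Theory.
Import numFieldNormedType.Exports.
Local Open Scope classical_set_scope.
Local Open Scope ring_scope.

Section Defs.
Variable R : realType.

Definition concave_on_oo (a b : R) (K : R -> \bar R) : Prop :=
  forall x y l : R, a < x < b -> a < y < b -> 0 <= l <= 1 ->
    (l%:E * K x + (1 - l)%R%:E * K y <= K (l * x + (1 - l) * y)%R)%E.

(* A kernel function, already extended to [-1,1] by its one-sided limits.
   Values outside [-1,1] are irrelevant. *)
Definition kernel_limits (K : R -> \bar R) : Prop :=
  (K t @[t --> at_right 0] --> K 0) /\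
  (K t @[t --> at_left 0] --> K 0) /\
  (K t @[t --> at_right (-1)] --> K (-1)) /\
  (K t @[t --> at_left 1] --> K 1).

Definition is_kernel (K : R -> \bar R) : Prop :=
  [/\ (forall t, -1 < t < 0 \/ 0 < t < 1 -> K t \is a fin_num),
      (forall t, -1 <= t <= 1 -> K t != +oo%E),
      concave_on_oo (-1) 0 K,
      concave_on_oo 0 1 K &
      kernel_limits K].

Definition singular_kernel (K : R -> \bar R) : Prop := K 0 = -oo%E.

(* n-field function on [0,1]: bounded above, and the set of points where it is
   finite has weight > n (endpoints weigh 1/2, interior points weigh 1).
   The weight condition is written (times 2) via finitely many distinct
   interior points: 2 * #points + [0 finite] + [1 finite] > 2 n. *)
Definition is_field_fun (n : nat) (J : R -> \bar R) : Prop :=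
  (exists M : R, forall t, 0 <= t <= 1 -> (J t <= M%:E)%E) /\
  exists s : seq R, [/\ uniq s,
    (forall t, t \in s -> 0 < t < 1 /\ J t \is a fin_num) &
    (2 * n < 2 * size s + `[< J 0%R \is a fin_num >] + `[< J 1%R \is a fin_num >])%N].

(* y_0 := 0, y_k := y's k-th coordinate (1-based) for 1 <= k <= n, y_{n+1} := 1 *)
Definition yext (n : nat) (y : 'rV[R]_n) (k : nat) : R :=
  if k is k'.+1 then oapp (fun i : 'I_n => y 0 i) 1 (insub k') else 0.

Definition Sbar (n : nat) : set 'rV[R]_n :=
  [set y | forall k : nat, (k <= n)%N -> yext y k <= yext y k.+1].

Definition Ffun (n : nat) (J : R -> \bar R) (K : 'I_n -> R -> \bar R)
  (y : 'rV[R]_n) (t : R) : \bar R :=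
  (J t + \sum_(i < n) K i (t - y 0 i)%R)%E.

Definition mj (n : nat) (J : R -> \bar R) (K : 'I_n -> R -> \bar R)
  (j : nat) (y : 'rV[R]_n) : \bar R :=
  ereal_sup [set Ffun J K y t | t in `[yext y j, yext y j.+1]].

End Defs.

(* Main.v *)
Require Import Defs.
From HB Require Import structures.
From mathcomp Require Import all_boot all_order all_algebra.
From mathcomp Require Import all_classical all_reals all_analysis.
From mathcomp Require Import ring lra.
Import Order.TTheory GRing.Theory Num.Theory.
Import numFieldNormedType.Exports.
Set Implicit Arguments. Unset Strict Implicit. Unset Printing Implicit Defensive.
Local Open Scope classical_set_scope.
Local Open Scope ring_scope.

Section Conc.
Variable R : realType.
Implicit Types (f : R -> R).

Lemma chord f a b p q r :
  (forall x y l : R, a < x < b -> a < y < b -> 0 <= l <= 1 ->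
     l * f x + (1 - l) * f y <= f (l * x + (1 - l) * y)) ->
  a < p -> p < q -> q < r -> r < b ->
  (r - q) * f p + (q - p) * f r <= (r - p) * f q.
Proof.
move=> hc ap pq qr rb.
have rp : 0 < r - p by lra.
pose l := (r - q) / (r - p).
have hl : 0 <= l <= 1.
  rewrite /l; apply/andP; split; first by apply: divr_ge0; lra.
  by rewrite ler_pdivrMr //; lra.
have := hc p r l ltac:(lra) ltac:(lra) hl.
have -> : l * p + (1 - l) * r = q.
  rewrite /l; field; lra.
move=> h.
have e1 : (r - q) = l * (r - p) by rewrite /l; field; lra.
have e2 : (q - p) = (1 - l) * (r - p) by rewrite /l; field; lra.
rewrite e1 e2.
have : (l * f p + (1 - l) * f r) * (r - p) <= f q * (r - p).
  by rewrite ler_pM2r.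
lra.
Qed.

Lemma concave_cont f a b s0 :
  (forall x y l : R, a < x < b -> a < y < b -> 0 <= l <= 1 ->
     l * f x + (1 - l) * f y <= f (l * x + (1 - l) * y)) ->
  a < s0 < b -> f x @[x --> s0] --> f s0.
Proof.
move=> hc /andP[as0 s0b].
pose u := (a + s0) / 2; pose v := (s0 + b) / 2.
have au : a < u by rewrite /u; lra.
have us0 : u < s0 by rewrite /u; lra.
have s0v : s0 < v by rewrite /v; lra.
have vb : v < b by rewrite /v; lra.
pose A1 := `|f v - f s0| / (v - s0).
pose A2 := `|f s0 - f u| / (s0 - u).
have hA1 : A1 * (v - s0) = `|f v - f s0| by rewrite /A1; field; lra.
have hA2 : A2 * (s0 - u) = `|f s0 - f u| by rewrite /A2; field; lra.
have A1ge : 0 <= A1 by rewrite /A1 divr_ge0 //; lra.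
have A2ge : 0 <= A2 by rewrite /A2 divr_ge0 //; lra.
pose C := A1 + A2 + 1.
have key : forall s, u < s < v -> `|f s - f s0| <= C * `|s - s0|.
  move=> s /andP[us sv].
  have n1 := ler_norm (f v - f s0); have n1' := ler_norm (- (f v - f s0)).
  have n2 := ler_norm (f s0 - f u); have n2' := ler_norm (- (f s0 - f u)).
  rewrite normrN in n1'; rewrite normrN in n2'.
  have [ss0|ss0|->] := ltgtP s s0; last by rewrite !subrr normr0 mulr0.
  - have c1 := chord hc au us ss0 s0b.
    have as' : a < s by lra.
    have c2 := chord hc as' ss0 s0v vb.
    rewrite (ltr0_norm (_ : s - s0 < 0)); last by lra.
    rewrite ler_norml /C; apply/andP; split.
    +
      have : 0 <= (A1 + 1) * (s0 - s) by apply: mulr_ge0; lra.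
      have h : (s0 - u) * (f s - f s0) >= - ((s0 - s) * `|f s0 - f u|) by nra.
      rewrite -hA2 in h.
      have h' : (s0 - u) * (f s - f s0 + A2 * (s0 - s)) >= 0 by nra.
      have : f s - f s0 + A2 * (s0 - s) >= 0.
        by move: h'; rewrite pmulr_rge0 //; lra.
      nra.
    + have : 0 <= (A2 + 1) * (s0 - s) by apply: mulr_ge0; lra.
      have h : (v - s0) * (f s - f s0) <= (s0 - s) * `|f v - f s0| by nra.
      rewrite -hA1 in h.
      have h' : (v - s0) * (A1 * (s0 - s) - (f s - f s0)) >= 0 by nra.
      have : A1 * (s0 - s) - (f s - f s0) >= 0.
        by move: h'; rewrite pmulr_rge0 //; lra.
      nra.
  - have sb : s < b by lra.
    have c1 := chord hc au us0 ss0 sb.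
    have c2 := chord hc as0 ss0 sv vb.
    rewrite (gtr0_norm (_ : 0 < s - s0)); last by lra.
    rewrite ler_norml /C; apply/andP; split.
    + have : 0 <= (A2 + 1) * (s - s0) by apply: mulr_ge0; lra.
      have h : (v - s0) * (f s - f s0) >= - ((s - s0) * `|f v - f s0|) by nra.
      rewrite -hA1 in h.
      have h' : (v - s0) * (f s - f s0 + A1 * (s - s0)) >= 0 by nra.
      have : f s - f s0 + A1 * (s - s0) >= 0.
        by move: h'; rewrite pmulr_rge0 //; lra.
      nra.
    + have : 0 <= (A1 + 1) * (s - s0) by apply: mulr_ge0; lra.
      have h : (s0 - u) * (f s - f s0) <= (s - s0) * `|f s0 - f u| by nra.
      rewrite -hA2 in h.
      have h' : (s0 - u) * (A2 * (s - s0) - (f s - f s0)) >= 0 by nra.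
      have : A2 * (s - s0) - (f s - f s0) >= 0.
        by move: h'; rewrite pmulr_rge0 //; lra.
      nra.
have C0 : 0 < C by rewrite /C; lra.
apply/cvgrPdist_lt => e e0.
have d0 : 0 < Num.min (Num.min (s0 - u) (v - s0)) (e / C).
  by rewrite !lt_min !subr_gt0 us0 s0v divr_gt0.
near=> s.
have hs : `|s0 - s| < Num.min (Num.min (s0 - u) (v - s0)) (e / C).
  by near: s; apply: cvgr_dist_lt.
move: hs; rewrite !lt_min => /andP[/andP[h1 h2] h3].
have : u < s < v.
  move: h1 h2; rewrite distrC => h1 h2.
  have := ler_norm (s - s0); have := ler_norm (- (s - s0)); rewrite normrN.
  move=> ? ?; apply/andP; split; lra.
move=> /key hk.
rewrite distrC (le_lt_trans hk) //.
rewrite distrC in h3.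
by rewrite -ltr_pdivlMl // mulrC.
Unshelve. all: by end_near.
Qed.
End Conc.
Local Open Scope ereal_scope.
Section K.
Variable R : realType.
Implicit Types K : R -> \bar R.

Lemma Kint K (a b : R) s0 : concave_on_oo a b K ->
  (forall t, (a < t < b)%R -> K t \is a fin_num) -> (a < s0 < b)%R ->
  K s @[s --> s0] --> K s0.
Proof.
move=> hc hf hs0.
have hcr : forall x y l : R, (a < x < b)%R -> (a < y < b)%R -> (0 <= l <= 1)%R ->
   (l * fine (K x) + (1 - l) * fine (K y) <= fine (K (l * x + (1 - l) * y)))%R.
  move=> x y l hx hy hl.
  have hm : (a < l * x + (1 - l) * y < b)%R.
    move: hx hy hl => /andP[ax xb] /andP[ay yb] /andP[l0 l1].
    have [->|lp] := eqVneq l 0%R; first by rewrite mul0r add0r subr0 mul1r ay yb.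
    have lp' : (0 < l)%R by rewrite lt_neqAle eq_sym lp.
    have e1 : (0 < l * (x - a))%R by apply: mulr_gt0; lra.
    have e2 : (0 <= (1 - l) * (y - a))%R by apply: mulr_ge0; lra.
    have e3 : (0 < l * (b - x))%R by apply: mulr_gt0; lra.
    have e4 : (0 <= (1 - l) * (b - y))%R by apply: mulr_ge0; lra.
    apply/andP; split; nra.
  have := hc x y l hx hy hl.
  by rewrite -(fineK (hf _ hx)) -(fineK (hf _ hy)) -(fineK (hf _ hm)) -!EFinM -EFinD lee_fin.
have hcf := concave_cont hcr hs0.
rewrite -(fineK (hf _ hs0)).
apply: cvg_EFin => //.
move: hs0 => /andP[as0 s0b].
near=> s; apply: hf; apply/andP; split.
  by near: s; apply: (cvgr_gt s0).
by near: s; apply: (cvgr_lt s0).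
Unshelve. all: by end_near.
Qed.

Lemma Kcont K : is_kernel K -> forall s0 : R, (-1 <= s0 <= 1)%R ->
  forall P, nbhs (K s0) P -> \forall s \near s0, (-1 <= s <= 1)%R -> P (K s).
Proof.
move=> [hf _ hc1 hc2 [hl0 [hr0 [hlm hl1]]]] s0 hs0 P hP.
have hPs0 : P (K s0) by apply: nbhs_singleton.
have [e|s0m] := eqVneq s0 (-1)%R.
  subst s0.
  have hh0 : \forall s \near ((-1)%R : R), (-1 < s)%R -> P (K s) := hlm P hP.
  move: hh0; apply: filterS => s hh hs.
  have [->|sn] := eqVneq s (-1)%R; first by [].
  apply: hh; move: hs => /andP[hs _]; by rewrite /= lt_neqAle eq_sym sn hs.
have [e|s01] := eqVneq s0 1%R.
  subst s0.
  have hh0 : \forall s \near (1%R : R), (s < 1)%R -> P (K s) := hl1 P hP.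
  move: hh0; apply: filterS => s hh hs.
  have [->|sn] := eqVneq s 1%R; first by [].
  apply: hh; move: hs => /andP[_ hs]; by rewrite /= lt_neqAle sn hs.
have [e|s00] := eqVneq s0 0%R.
  subst s0.
  have hh0 : \forall s \near (0%R : R), (s < 0)%R -> P (K s) := hr0 P hP.
  have hh1 : \forall s \near (0%R : R), (0 < s)%R -> P (K s) := hl0 P hP.
  move: hh0 hh1; apply: filterS2 => s h1 h2 hs.
  have [sn|sp|->] := ltgtP s 0%R; [exact: h1|exact: h2|by []].
have hK : K s @[s --> s0] --> K s0.
  move: hs0 => /andP[a1 a2].
  have [sn|sp|e] := ltgtP s0 0%R; last by move: s00; rewrite e eqxx.
    apply: (Kint hc1) => [t ht|]; first by apply: hf; left.
    by rewrite sn andbT lt_neqAle eq_sym s0m a1.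
  apply: (Kint hc2) => [t ht|]; first by apply: hf; right.
  by rewrite sp /= lt_neqAle s01 a2.
have hh0 : \forall s \near s0, P (K s) := hK P hP.
by move: hh0; apply: filterS => s hh _.
Qed.
End K.

Local Close Scope ereal_scope.
Section T.
Variable R : realType.
Variable n : nat.
Lemma hcont (t0 : R) (y : 'rV[R]_n) (i : 'I_n) :
  (fun p : R * 'rV[R]_n => p.1 - p.2 0 i) @ (t0, y) --> t0 - y 0 i.
Proof.
apply: cvgB; first exact: cvg_fst.
apply: (@cvg_comp _ _ _ (fun p : R * 'rV[R]_n => p.2) (fun M : 'rV[R]_n => M 0 i) _ (nbhs y)).
  exact: cvg_snd.
exact: coord_continuous.
Qed.
Lemma insubn (x : 'rV[R]_n) : yext x n.+1 = 1.
Proof. by rewrite /yext insubF // ltnn. Qed.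
Lemma yext_coord (x : 'rV[R]_n) (i : 'I_n) : yext x i.+1 = x 0 i.
Proof. by rewrite /yext; case: insubP => [j _ /val_inj -> | ] /=; rewrite ?ltn_ord. Qed.
End T.
Section S.
Variable R : realType.
Variable n : nat.
Implicit Types y x : 'rV[R]_n.

Lemma Sbar_mono y : Sbar y -> forall k l, (k <= l <= n.+1)%N -> yext y k <= yext y l.
Proof.
move=> hy k; elim=> [|l IH] /andP[kl ln].
  by move: kl; rewrite leqn0 => /eqP ->.
move: kl; rewrite leq_eqVlt => /orP[/eqP -> //|kl].
apply: (le_trans (IH _)); first by rewrite -ltnS kl /= ltnW.
by apply: hy.
Qed.

Lemma Sbar_01 y k : Sbar y -> (k <= n.+1)%N -> 0 <= yext y k <= 1.
Proof.
move=> hy kn; apply/andP; split.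
  by have := Sbar_mono hy (k:=0) (l:=k); rewrite kn /=; apply.
by rewrite -(insubn y); apply: Sbar_mono => //; rewrite kn leqnn.
Qed.

Lemma Sbar_coord y (i : 'I_n) : Sbar y -> 0 <= y 0 i <= 1.
Proof. by move=> hy; rewrite -yext_coord; apply: Sbar_01 => //; rewrite ltnS ltnW. Qed.

Lemma yext_cases k : (k <= n.+1)%N ->
  (forall x, yext x k = 0) \/ (forall x, yext x k = 1) \/
  exists i : 'I_n, forall x, yext x k = x 0 i.
Proof.
case: k => [|k] kn; first by left.
rewrite ltnS leq_eqVlt in kn; case/orP: kn => [/eqP ->|kn].
  by right; left => x; rewrite insubn.
by right; right; exists (Ordinal kn) => x; rewrite -yext_coord.
Qed.
End S.

Local Close Scope ereal_scope.

Section G.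
Variable R : realType.
Variable n : nat.
Variable K : 'I_n -> R -> \bar R.
Implicit Types y x : 'rV[R]_n.

Definition Gs x t := (\sum_(i < n) K i (t - x 0 i)%R)%E.

Definition Dset : set (R * 'rV[R]_n) := fun p => 0 <= p.1 <= 1 /\ Sbar p.2.

Lemma Kfin_notpinf i s : is_kernel (K i) -> -1 <= s <= 1 -> K i s != +oo%E.
Proof. by case=> _ h _ _ _; apply: h. Qed.

Lemma Gcont_seq (hK : forall i, is_kernel (K i)) y t0 : Sbar y -> 0 <= t0 <= 1 ->
  forall r : seq 'I_n,
   ((\sum_(i <- r) K i (t0 - y 0 i)%R)%E != +oo%E) /\
   (fun p : R * 'rV[R]_n => (\sum_(i <- r) K i (p.1 - p.2 0 i)%R)%E)
      @ within Dset (nbhs (t0, y)) --> (\sum_(i <- r) K i (t0 - y 0 i)%R)%E.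
Proof.
move=> hy ht0; elim=> [|i r [IH1 IH2]].
  rewrite big_nil; split => //.
  rewrite (_ : (fun p : R * 'rV[R]_n => (\sum_(i <- [::]) K i (p.1 - p.2 0 i)%R)%E) = fun=> 0%E); last by apply: funext => p; rewrite big_nil.
  exact: cvg_cst.
rewrite big_cons.
rewrite (_ : (fun p : R * 'rV[R]_n => (\sum_(j <- i :: r) K j (p.1 - p.2 0 j)%R)%E) = (fun p : R * 'rV[R]_n => K i (p.1 - p.2 0 i)%R) \+
   (fun p : R * 'rV[R]_n => (\sum_(j <- r) K j (p.1 - p.2 0 j)%R)%E)); last by apply: funext => p; rewrite big_cons.
have hs : -1 <= t0 - y 0 i <= 1.
  by move: ht0 (Sbar_coord i hy) => /andP[? ?] /andP[? ?]; apply/andP; split; lra.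
have hKi := Kfin_notpinf (hK i) hs.
split.
  move: hKi IH1; case: (K i _) => [a||] //; case: (\sum_(_ <- _) _)%E => //.
have hd : (K i (t0 - y 0 i)%R +? \sum_(j <- r) K j (t0 - y 0 j)%R)%E.
  move: hKi IH1; case: (K i _) => [a||] //; case: (\sum_(_ <- _) _)%E => //.
apply: (cvgeD hd) => //.
move=> P hP.
have hc := Kcont (hK i) hs hP.
have hh : nbhs (t0, y) (fun p : R * 'rV[R]_n => (-1 <= p.1 - p.2 0 i <= 1) -> P (K i (p.1 - p.2 0 i)%R)) := @hcont R n t0 y i _ hc.
suff hh2 : nbhs (t0, y) (fun p : R * 'rV[R]_n => Dset p -> P (K i (p.1 - p.2 0 i)%R)) by exact: hh2.
move: hh; apply: filterS => p hp [hp1 hp2].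
apply: hp.
by move: hp1 (Sbar_coord i hp2) => /andP[? ?] /andP[? ?]; apply/andP; split; lra.
Qed.

Lemma Gcont (hK : forall i, is_kernel (K i)) y t0 : Sbar y -> 0 <= t0 <= 1 ->
  forall P, nbhs (Gs y t0) P ->
  \forall p \near (t0, y), Dset p -> P (Gs p.2 p.1).
Proof.
move=> hy ht0 P hP.
have [_ h] := Gcont_seq hK hy ht0 (index_enum 'I_n).
exact: h P hP.
Qed.
End G.


Section E.
Variable R : realType.
Local Open Scope ereal_scope.

Lemma ecvg_bounds {I} {F : set_system I} {FF : Filter F} (f : I -> \bar R) (L : \bar R) :
 (forall a : R, a%:E < L -> \forall x \near F, a%:E < f x) ->
 (forall b : R, L < b%:E -> \forall x \near F, f x < b%:E) -> f @ F --> L.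
Proof.
case: L => [r||] ha hb.
- move=> P /nbhs_EFin /nbhs_ballP [e /= e0 he].
  have h1 := ha (r - e)%R; have h2 := hb (r + e)%R.
  rewrite !lte_fin in h1 h2.
  have : \forall x \near F, ((r - e)%:E < f x) /\ (f x < (r + e)%:E).
    by apply: filterS2 (h1 _) (h2 _) => //; lra.
  apply: filterS => x [].
  case E: (f x) => [s||] //= hs1 hs2.
  change (P (f x)); rewrite E.
  rewrite !lte_fin in hs1 hs2. apply: (he s). rewrite /ball /=.
  rewrite ltr_norml; apply/andP; split; lra.
- by apply/cvgeyPgt => A; apply: ha; rewrite ltry.
- by apply/cvgeNyPlt => A; apply: hb; rewrite ltNyr.
Qed.

Lemma nbhs_band (r e : R) : (0 < e)%R ->
  nbhs (r%:E) (fun z => (r - e)%:E < z < (r + e)%:E).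
Proof.
move=> e0; apply/nbhs_EFin; near=> z.
have : (`|r - z| < e)%R by near: z; apply: cvgr_dist_lt.
rewrite !lte_fin ltr_norml => /andP[? ?]; apply/andP; split; lra.
Unshelve. all: by end_near.
Qed.

Lemma addlt (a g : \bar R) (M c : R) : a <= M%:E -> g < c%:E -> a + g < (M + c)%:E.
Proof.
case: a => [q||] //= ha hg.
  by rewrite EFinD; apply: lee_ltD.
by rewrite addNye ltNyr.
Qed.
End E.


Section N.
Variable R : realType.
Variable n : nat.
Implicit Types y x : 'rV[R]_n.

Lemma fst2 (t0 : R) y : (fun p : R * 'rV[R]_n => p.1) @ (t0, y) --> t0.
Proof. exact: cvg_fst. Qed.

Lemma coord2 (t0 : R) y (i : 'I_n) : (fun p : R * 'rV[R]_n => p.2 0 i) @ (t0, y) --> y 0 i.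
Proof.
apply: (@cvg_comp _ _ _ (fun p : R * 'rV[R]_n => p.2) (fun M : 'rV[R]_n => M 0 i) _ (nbhs y)).
  exact: cvg_snd.
exact: coord_continuous.
Qed.

Lemma yext_cases2 k : (k <= n.+1)%N ->
  (forall x, yext x k = 0) \/ (forall x, yext x k = 1) \/
  exists i : 'I_n, k = i.+1.
Proof.
case: k => [|k] kn; first by left.
rewrite ltnS leq_eqVlt in kn; case/orP: kn => [/eqP ->|kn].
  by right; left => x; rewrite insubn.
by right; right; exists (Ordinal kn).
Qed.

Lemma near_incl_l k y (t0 : R) : (k <= n.+1)%N ->
  (forall i : 'I_n, k = i.+1 -> t0 != y 0 i) ->
  \forall p \near (t0, y), yext p.2 k <= p.1 -> yext y k <= p.1.
Proof.
move=> kn hne.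
case: (yext_cases2 kn) => [h|[h|[i ki]]].
- by apply: filterE => p; rewrite !h.
- by apply: filterE => p; rewrite !h.
subst k; rewrite !yext_coord; have := hne i erefl.
rewrite neq_lt => /orP[lt|lt].
  pose c := (t0 + y 0 i) / 2.
  have h1 : \forall p \near (t0, y), p.1 < c.
    have : t0 < c by rewrite /c; lra.
    by move=> tc; apply: (cvgr_lt t0 (@fst2 t0 y)).
  have h2 : \forall p \near (t0, y), c < (p : R * 'rV[R]_n).2 0 i.
    by apply: (cvgr_gt (y 0 i) (@coord2 t0 y i)); rewrite /c; lra.
  by apply: filterS2 h1 h2 => p h1 h2; rewrite !yext_coord => h3; lra.
have h1 : \forall p \near (t0, y), y 0 i < p.1.
  by apply: (cvgr_gt t0 (@fst2 t0 y)).
by apply: filterS h1 => p h1; rewrite !yext_coord => _; lra.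
Qed.

Lemma near_incl_r k y (t0 : R) : (k <= n.+1)%N ->
  (forall i : 'I_n, k = i.+1 -> t0 != y 0 i) ->
  \forall p \near (t0, y), p.1 <= yext p.2 k -> p.1 <= yext y k.
Proof.
move=> kn hne.
case: (yext_cases2 kn) => [h|[h|[i ki]]].
- by apply: filterE => p; rewrite !h.
- by apply: filterE => p; rewrite !h.
subst k; rewrite !yext_coord; have := hne i erefl.
rewrite neq_lt => /orP[lt|lt].
  have h1 : \forall p \near (t0, y), p.1 < y 0 i.
    by apply: (cvgr_lt t0 (@fst2 t0 y)).
  by apply: filterS h1 => p h1; rewrite !yext_coord => _; lra.
pose c := (t0 + y 0 i) / 2.
have h1 : \forall p \near (t0, y), c < p.1.
  by apply: (cvgr_gt t0 (@fst2 t0 y)); rewrite /c; lra.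
have h2 : \forall p \near (t0, y), (p : R * 'rV[R]_n).2 0 i < c.
  by apply: (cvgr_lt (y 0 i) (@coord2 t0 y i)); rewrite /c; lra.
by apply: filterS2 h1 h2 => p h1 h2; rewrite !yext_coord => h3; lra.
Qed.

Lemma near_in_l k y (t : R) : (k <= n.+1)%N ->
  (forall i : 'I_n, k = i.+1 -> t != y 0 i) -> yext y k <= t ->
  \forall x \near y, yext x k <= t.
Proof.
move=> kn hne hle.
case: (yext_cases2 kn) => [h|[h|[i ki]]].
- by apply: filterE => x; rewrite h -(h y).
- by apply: filterE => x; rewrite h -(h y).
subst k; move: hle; rewrite !yext_coord => hle.
have lt : y 0 i < t by rewrite lt_neqAle hle eq_sym hne.
have hc : (fun x : 'rV[R]_n => x 0 i) @ y --> y 0 i := @coord_continuous R 1 n 0 i y.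
have h1 : \forall x \near y, (x : 'rV[R]_n) 0 i < t.
  by apply: (cvgr_lt (y 0 i) hc).
by apply: filterS h1 => x h1; rewrite yext_coord ltW.
Qed.

Lemma near_in_r k y (t : R) : (k <= n.+1)%N ->
  (forall i : 'I_n, k = i.+1 -> t != y 0 i) -> t <= yext y k ->
  \forall x \near y, t <= yext x k.
Proof.
move=> kn hne hle.
case: (yext_cases2 kn) => [h|[h|[i ki]]].
- by apply: filterE => x; rewrite h -(h y).
- by apply: filterE => x; rewrite h -(h y).
subst k; move: hle; rewrite !yext_coord => hle.
have lt : t < y 0 i by rewrite lt_neqAle hle hne.
have hc : (fun x : 'rV[R]_n => x 0 i) @ y --> y 0 i := @coord_continuous R 1 n 0 i y.
have h1 : \forall x \near y, t < (x : 'rV[R]_n) 0 i.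
  by apply: (cvgr_gt (y 0 i) hc).
by apply: filterS h1 => x h1; rewrite yext_coord ltW.
Qed.

Lemma prod_near_y (t0 : R) y (Q : R * 'rV[R]_n -> Prop) :
  (\forall p \near (t0, y), Q p) -> \forall t \near t0, Q (t, y).
Proof.
move=> [[A B] /= [At0 By] AB].
apply: filterS At0 => t At; apply: (AB (t, y)); split => //.
exact: nbhs_singleton By.
Qed.

Lemma prod_near_t (t0 : R) y (Q : R * 'rV[R]_n -> Prop) :
  (\forall p \near (t0, y), Q p) -> \forall x \near y, Q (t0, x).
Proof.
move=> [[A B] /= [At0 By] AB].
apply: filterS By => x Bx; apply: (AB (t0, x)); split => //.
exact: nbhs_singleton At0.
Qed.

Lemma prod_near_lift_t (t0 : R) y (Q : R -> Prop) :
  (\forall t \near t0, Q t) -> \forall p \near (t0, y), Q p.1.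
Proof. by move=> h; apply: (@fst2 t0 y). Qed.

End N.


Section M.
Variable R : realType.
Variable n : nat.
Variable K : 'I_n -> R -> \bar R.
Variable J : R -> \bar R.
Implicit Types y x : 'rV[R]_n.

Lemma FfunE x t : Ffun J K x t = (J t + Gs K x t)%E.
Proof. by []. Qed.

Lemma mj_ub (j : nat) x t : yext x j <= t -> t <= yext x j.+1 ->
  (Ffun J K x t <= mj J K j x)%E.
Proof.
move=> h1 h2; apply: ereal_sup_ubound; exists t => //.
by rewrite /= in_itv /= h1 h2.
Qed.

Lemma itv01 (j : nat) x t : (j <= n)%N -> Sbar x -> yext x j <= t -> t <= yext x j.+1 ->
  0 <= t <= 1.
Proof.
move=> hj hx h1 h2.
have := Sbar_01 (k:=j) hx; have := Sbar_01 (k:=j.+1) hx.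
rewrite ltnS hj (leq_trans hj) // => /(_ isT) /andP[? ?] /(_ isT) /andP[? ?].
by apply/andP; split; lra.
Qed.

Lemma Gs_notpinf (hK : forall i, is_kernel (K i)) y t : Sbar y -> 0 <= t <= 1 ->
  Gs K y t != +oo%E.
Proof. by move=> hy ht; have [h _] := Gcont_seq hK hy ht (index_enum 'I_n). Qed.

Lemma Gs_fin_ne (hS : forall i, singular_kernel (K i)) y t r :
  Gs K y t = r%:E -> forall i : 'I_n, t != y 0 i.
Proof.
move=> EG i; apply/negP => /eqP e.
suff : Gs K y t = -oo%E by rewrite EG.
apply/eqP; rewrite /Gs esum_eqNy; apply/existsP; exists i.
by rewrite /= e subrr hS.
Qed.


Lemma lower (hK : forall i, is_kernel (K i)) (hS : forall i, singular_kernel (K i))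
  M (hM : forall t, 0 <= t <= 1 -> (J t <= M%:E)%E) (j : nat) (hj : (j <= n)%N) y :
  Sbar y -> forall a : R, (a%:E < mj J K j y)%E ->
  \forall x \near y, Sbar x -> (a%:E < mj J K j x)%E.
Proof.
move=> hy a /ereal_sup_gtP [z [t ht <-] haz].
move: ht; rewrite /= in_itv /= => /andP[ht1 ht2].
have ht01 := itv01 hj hy ht1 ht2.
have hGnp := Gs_notpinf hK hy ht01.
have hJt := hM t ht01.
move: haz; rewrite FfunE.
case EJ : (J t) => [q||]; case EG : (Gs K y t) => [r||] //; rewrite ?EJ ?EG //= in hJt hGnp *.
move=> haz; rewrite lte_fin in haz.
have hne := Gs_fin_ne hS EG.
have hin1 := near_in_l (k:=j) (leq_trans hj (leqnSn n)) (fun i _ => hne i) ht1.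
have hin2 := near_in_r (k:=j.+1) hj (fun i _ => hne i) ht2.
pose e := (q + r - a) / 2.
have e0 : 0 < e by rewrite /e; lra.
have hb : \forall p \near (t, y), Dset p -> ((r - e)%:E < Gs K p.2 p.1 < (r + e)%:E)%E.
  have := Gcont hK hy ht01 (P := fun z => ((r - e)%:E < z < (r + e)%:E)%E).
  by rewrite EG => /(_ (nbhs_band r e0)).
have hb' := prod_near_t hb.
near=> x => hx.
have i1 : yext x j <= t by near: x.
have i2 : t <= yext x j.+1 by near: x.
have hD : Dset (t, x) by split.
have /andP[b1 b2] : ((r - e)%:E < Gs K x t < (r + e)%:E)%E.
  by have := near hb' x; apply.
apply: (lt_le_trans _ (mj_ub i1 i2)); rewrite FfunE EJ.
move: b1 b2; case: (Gs K x t) => [s||] //= b1 b2.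
rewrite !lte_fin in b1 b2 *; rewrite /e in b1; lra.
Unshelve. all: by end_near.
Qed.

Lemma upper (hK : forall i, is_kernel (K i)) (hS : forall i, singular_kernel (K i))
  M (hM : forall t, 0 <= t <= 1 -> (J t <= M%:E)%E) (j : nat) (hj : (j <= n)%N) y :
  Sbar y -> forall b : R, (mj J K j y < b%:E)%E ->
  \forall x \near y, Sbar x -> (mj J K j x < b%:E)%E.
Proof.
move=> hy b hb.
have [b1 hb1 b1b] : exists2 b1 : R, (mj J K j y < b1%:E)%E & b1 < b.
  move: hb; case: (mj J K j y) => [r||] //= hb.
  - by exists ((r + b) / 2); rewrite ?lte_fin in hb *; lra.
  - by exists (b - 1); [rewrite ltNyr | lra].
pose b2 := (b1 + b) / 2.
have nc := (compact_near_coveringP _).1 (@segment_compact R 0 1).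
have cover : \forall x \near y, `[0, 1] `<=` (fun t => Sbar x -> yext x j <= t ->
     t <= yext x j.+1 -> (Ffun J K x t < b2%:E)%E).
  apply: (nc 'rV[R]_n (nbhs y) (fun x t => Sbar x -> yext x j <= t ->
     t <= yext x j.+1 -> (Ffun J K x t < b2%:E)%E)) => t0 ht0.
  have ht01 : 0 <= t0 <= 1 by move: ht0; rewrite /= in_itv.
  suff hh : \forall p \near (t0, y), Sbar p.2 -> yext p.2 j <= p.1 ->
      p.1 <= yext p.2 j.+1 -> (Ffun J K p.2 p.1 < b2%:E)%E by exact: hh.
  have hGnp := Gs_notpinf hK hy ht01.
  case EG : (Gs K y t0) => [r||]; rewrite ?EG // in hGnp.
    have hne := Gs_fin_ne hS EG.
    have inc1 := near_incl_l (k:=j) (leq_trans hj (leqnSn n)) (fun i _ => hne i).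
    have inc2 := near_incl_r (k:=j.+1) hj (fun i _ => hne i).
    pose e := (b2 - b1) / 2.
    have e0 : 0 < e by rewrite /e /b2; lra.
    have hb2 : \forall p \near (t0, y), Dset p -> ((r - e)%:E < Gs K p.2 p.1 < (r + e)%:E)%E.
      have := Gcont hK hy ht01 (P := fun z => ((r - e)%:E < z < (r + e)%:E)%E).
      by rewrite EG => /(_ (nbhs_band r e0)).
    have hby := prod_near_lift_t y (prod_near_y hb2).
    near=> p => hx h1 h2.
    have ht := itv01 hj hx h1 h2.
    have hy1 : yext y j <= p.1 by have := near inc1 p; apply.
    have hy2 : p.1 <= yext y j.+1 by have := near inc2 p; apply.
    have /andP[c1 c2] : ((r - e)%:E < Gs K p.2 p.1 < (r + e)%:E)%E.
      by have := near hb2 p; apply => //; split.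
    have /andP[d1 d2] : ((r - e)%:E < Gs K y p.1 < (r + e)%:E)%E.
      by have := near hby p; apply => //; split.
    have hFy := le_lt_trans (mj_ub hy1 hy2) hb1.
    have hJt := hM _ ht.
    move: hFy; rewrite !FfunE.
    move: hJt c1 c2 d1 d2.
    case: (J p.1) => [q||] //=; last by move=> *; rewrite addNye ltNyr.
    case: (Gs K p.2 p.1) => [s||] //=; case: (Gs K y p.1) => [s'||] //=.
    rewrite !lte_fin => _ c1 c2 d1 d2 hF.
    rewrite /e /b2 in c1 c2 d1 d2 *; lra.
  have hb2 : \forall p \near (t0, y), Dset p -> (Gs K p.2 p.1 < (b2 - M)%:E)%E.
    have := Gcont hK hy ht01 (P := fun z => (z < (b2 - M)%:E)%E).
    by rewrite EG => /(_ (ereal_nbhs_ninfty_lt (num_real _))).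
  near=> p => hx h1 h2.
  have ht := itv01 hj hx h1 h2.
  have hG : (Gs K p.2 p.1 < (b2 - M)%:E)%E by have := near hb2 p; apply => //; split.
  rewrite FfunE.
  have := addlt (hM _ ht) hG.
  by rewrite (_ : M + (b2 - M) = b2) //; ring.
near=> x => hx.
have hc := near cover x.
have : (mj J K j x <= b2%:E)%E.
  apply: ge_ereal_sup => _ [t ht <-].
  move: ht; rewrite /= in_itv /= => /andP[h1 h2].
  have ht := itv01 hj hx h1 h2.
  apply/ltW; apply: hc => //.
move=> h; apply: (le_lt_trans h); rewrite lte_fin /b2; lra.
Unshelve. all: by end_near.
Qed.

End M.

Unset Implicit Arguments.
Local Close Scope ereal_scope.
Local Open Scope classical_set_scope.
Local Open Scope ring_scope.

Theorem lemma3p3 (R : realType) (n : nat) (K : 'I_n -> R -> \bar R)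
  (J : R -> \bar R) :
  (forall i, is_kernel (K i)) -> (forall i, singular_kernel (K i)) ->
  is_field_fun n J ->
  forall j : 'I_n.+1, {within @Sbar R n, continuous (mj J K j)}.
Proof.
move=> hK hS [[M hM] _] j.
apply/subspace_continuousP => y hy.
have hj : (j <= n)%N by rewrite -ltnS ltn_ord.
apply: ecvg_bounds.
- by move=> a ha; exact: (lower hK hS hM hj hy ha).
- by move=> b hb; exact: (upper hK hS hM hj hy hb).
Qed.
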